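(* Let $P=\sum_{i=0}^Nq^iP_i(D)\in\mathbb{C}[q][D]$ with $D=q\frac{d}{dq}$, and let $P_i^{(r)}$ denote the $r$-th formal derivative of the polynomial $P_i$. Let $I=\sum_{0\leq i\leq N,\ j\geq0}a_{ij}h^iq^j$ with $a_{ij}\in\mathbb{C}$, and set $a_{ij}=0$ for $j<0$. Then $I$ is a perturbed solution of $P$ if and only if for every $0\leq s\leq N$ and every $m\in\mathbb{Z}$ $$\sum_{k=0}^s\frac{1}{(s-k)!}\Big(a_{k,m}P^{(s-k)}_N(m)+a_{k,m+1}P^{(s-k)}_{N-1}(m+1)+\cdots+a_{k,m+N}P^{(s-k)}_0(m+N)\Big)=0.$$
   Context: Write $I=\sum_{i=0}^NI^ih^i$ with $I^i=\sum_ja_{ij}q^j$, and put $I_r=\sum_{m=0}^rI^{r-m}\,t^m/m!\in\mathbb{C}[[q]][t]$. Operators act on $\mathbb{C}[[q]][t]$ via $D(f(q)t^m)=qf'(q)t^m+mf(q)t^{m-1}$, with $q$ acting by multiplication. $I$ is a perturbed solution of $P$ if $PI_r=0$ for all $0\leq r\leq N$. *)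

(* Defs.v *)
From HB Require Import structures.
From mathcomp Require Import all_boot all_order all_algebra.
From mathcomp Require Import complex.
From mathcomp Require Import reals Rstruct.
Set Implicit Arguments. Unset Strict Implicit. Unset Printing Implicit Defensive.
Import Order.TTheory GRing.Theory Num.Theory.
Local Open Scope ring_scope.

Notation Cplx := (complex Rdefinitions.R).

(* An element of C[[q]][t] is represented by its coefficient array:
   f j m = coefficient of q^j t^m. *)
Definition qtseries := nat -> nat -> Cplx.

(* D (f(q) t^m) = q f'(q) t^m + m f(q) t^(m-1) *)
Definition Dop (f : qtseries) : qtseries :=
  fun j m => j%:R * f j m + m.+1%:R * f j m.+1.

Definition qop (f : qtseries) : qtseries :=
  fun j m => if j is j'.+1 then f j' m else 0.

Definition polyD (p : {poly Cplx}) (f : qtseries) : qtseries :=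
  fun j m => \sum_(k < size p) p`_k * iter k Dop f j m.

Definition Pop (N : nat) (Pc : nat -> {poly Cplx}) (f : qtseries) : qtseries :=
  fun j m => \sum_(i < N.+1) iter i qop (polyD (Pc i) f) j m.

(* I_r = sum_{m=0}^r I^{r-m} t^m / m!, with I^i = sum_j a i j q^j *)
Definition Ir (a : nat -> nat -> Cplx) (r : nat) : qtseries :=
  fun j m => if (m <= r)%N then a (r - m)%N j / (m`!)%:R else 0.

Definition perturbed_solution (N : nat) (Pc : nat -> {poly Cplx})
    (a : nat -> nat -> Cplx) : Prop :=
  forall r : nat, (r <= N)%N -> forall j m : nat, Pop N Pc (Ir a r) j m = 0.

Definition aZ (a : nat -> nat -> Cplx) (i : nat) (j : int) : Cplx :=
  match j with Posz n => a i n | Negz _ => 0 end.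

(* Main.v *)
Require Import Defs.
From HB Require Import structures.
From mathcomp Require Import all_boot all_order all_algebra.
From mathcomp Require Import complex.
From mathcomp Require Import reals Rstruct.
From mathcomp Require Import ring zify.
Import Order.TTheory GRing.Theory Num.Theory.
Local Open Scope ring_scope.

Definition Irs (a : nat -> nat -> Cplx) (r i : nat) : qtseries :=
  fun j m => if (m + i <= r)%N then a (r - i - m)%N j / (m`!)%:R else 0.

Lemma fact_neq0 n : (n`!)%:R != 0 :> Cplx.
Proof. by rewrite pnatr_eq0 -lt0n fact_gt0. Qed.

Lemma Dop_Irs a r i j m :
  Dop (Irs a r i) j m = j%:R * Irs a r i j m + Irs a r i.+1 j m.
Proof.
rewrite /Dop /Irs; congr (_ + _).
rewrite addSn addnS; case: ifP => _; last by rewrite mulr0.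
have -> : (r - i - m.+1 = r - i.+1 - m)%N by rewrite -!subnDA addnS addSn.
rewrite factS natrM invfM.
have h : (m.+1)%:R != 0 :> Cplx by rewrite pnatr_eq0.
by field; rewrite fact_neq0 addrC natr1.
Qed.

Lemma Sh a r i j m : m.+1%:R * Irs a r i j m.+1 = Irs a r i.+1 j m.
Proof. by apply: (@addrI _ (j%:R * Irs a r i j m)); rewrite -Dop_Irs. Qed.

Lemma iterD a r j k m :
  iter k Dop (Irs a r 0) j m =
  \sum_(i < k.+1) 'C(k, i)%:R * (j%:R) ^+ (k - i) * Irs a r i j m.
Proof.
elim: k m => [|k IH] m.
  rewrite big_ord_recl big_ord0 /=. by rewrite subnn bin0 expr0 !mul1r addr0.
rewrite iterS {1}/Dop !IH mulr_sumr mulr_sumr -big_split /=.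
have E i : (i < k.+1)%N -> j%:R * ('C(k, i)%:R * j%:R ^+ (k - i) * Irs a r i j m) +
      m.+1%:R * ('C(k, i)%:R * j%:R ^+ (k - i) * Irs a r i j m.+1) =
   'C(k, i)%:R * j%:R ^+ (k.+1 - i) * Irs a r i j m +
   'C(k, i)%:R * j%:R ^+ (k - i) * Irs a r i.+1 j m.
  by move=> hi; rewrite -Sh subSn // exprS; ring.
under eq_bigr => i _ do rewrite E //.
rewrite big_split /= [RHS]big_ord_recl /= bin0 subn0.
under [in RHS]eq_bigr => i _ do rewrite /bump /= add1n binS natrD !mulrDl subSS.
rewrite big_split /= addrA; congr (_ + _).
rewrite big_ord_recl /= bin0 subn0 big_ord_recr /= bin_small // !mul0r addr0.
congr (_ + _); apply: eq_bigr => i _; rewrite /bump /= add1n subSS //.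
Qed.

Lemma sum_widen n K (F : nat -> Cplx) : (n <= K)%N ->
  (forall i, (n <= i)%N -> (i < K)%N -> F i = 0) ->
  \sum_(i < K) F i = \sum_(i < n) F i.
Proof.
move=> hnK hF; rewrite [RHS](big_ord_widen K F hnK) [RHS]big_mkcond /=.
apply: eq_bigr => i _; case: ifP => // h; by rewrite hF // leqNgt h.
Qed.

Lemma nderivn_horner (p : {poly Cplx}) i x :
  (p^`N(i)).[x] = \sum_(k < size p) p`_k * (x ^+ (k - i) *+ 'C(k, i)).
Proof.
rewrite -{1}[p]coefK poly_def linear_sum horner_sum; apply: eq_bigr => k _.
by rewrite linearZ /= nderivnXn hornerZ hornerMn hornerXn.
Qed.

Lemma polyD_Irs p a r j m : polyD p (Irs a r 0) j m =
  \sum_(i < size p) (p^`N(i)).[j%:R] * Irs a r i j m.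
Proof.
rewrite /polyD.
have W (k : 'I_(size p)) : iter k Dop (Irs a r 0) j m =
   \sum_(i < size p) 'C(k, i)%:R * (j%:R) ^+ (k - i) * Irs a r i j m.
  rewrite iterD (@sum_widen k.+1 (size p)
     (fun i : nat => 'C(k, i)%:R * (j%:R) ^+ (k - i) * Irs a r i j m)) //.
  by move=> i hi _; rewrite bin_small // !mul0r.
under eq_bigr => k _ do rewrite W.
under eq_bigr do rewrite mulr_sumr.
rewrite exchange_big /=; apply: eq_bigr => i _.
rewrite nderivn_horner mulr_suml; apply: eq_bigr => k _.
by rewrite mulrnAr -mulr_natl; ring.
Qed.

From Stdlib Require Import FunctionalExtensionality.

Lemma Ir_Irs a r : Ir a r = Irs a r 0.
Proof.
apply: functional_extensionality => j; apply: functional_extensionality => m.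
by rewrite /Ir /Irs addn0 subn0.
Qed.

Lemma polyD_Ir p a r j m : polyD p (Ir a r) j m =
  if (m <= r)%N then \sum_(i < (r - m).+1) (p^`N(i)).[j%:R] * a (r - m - i)%N j / (m`!)%:R
  else 0.
Proof.
rewrite Ir_Irs polyD_Irs.
set F := fun i : nat => (p^`N(i)).[j%:R] * Irs a r i j m.
have HF1 i : (size p <= i)%N -> F i = 0.
  by move=> h; rewrite /F nderivn_poly0 // horner0 mul0r.
have HF2 i : (r < m + i)%N -> F i = 0.
  by move=> h; rewrite /F /Irs leqNgt h mulr0.
case: leqP => hmr; last first.
  by apply: big1 => i _; apply: HF2; apply: (leq_trans hmr); rewrite leq_addr.
rewrite -(@sum_widen (size p) (size p + (r - m).+1) F) ?leq_addr //; last first.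
  by move=> i hi _; apply: HF1.
rewrite (@sum_widen (r - m).+1 (size p + (r - m).+1) F) ?leq_addl //; last first.
  by move=> i hi _; apply: HF2; rewrite -ltn_subLR.
apply: eq_bigr => i _; rewrite /F /Irs.
have hi : (m + i <= r)%N by have := ltn_ord i; lia.
by rewrite hi subnAC mulrA.
Qed.

Lemma iter_qop i g J M : iter i qop g J M = if (i <= J)%N then g (J - i)%N M else 0.
Proof.
elim: i J => [|i IH] J; first by rewrite subn0.
rewrite iterS /qop; case: J => [|J] //=.
Qed.

Definition Tsum N (Pc : nat -> {poly Cplx}) (a : nat -> nat -> Cplx) s J :=
  \sum_(i < N.+1) (if (i <= J)%N then
     \sum_(k < s.+1) ((Pc i)^`N(k)).[((J - i)%N)%:R] * a (s - k)%N (J - i)%N else 0).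

Lemma Pop_Ir N Pc a r J M : Pop N Pc (Ir a r) J M =
  if (M <= r)%N then ((M`!)%:R)^-1 * Tsum N Pc a (r - M) J else 0.
Proof.
rewrite /Pop; under eq_bigr do rewrite iter_qop polyD_Ir.
case: leqP => hM.
  rewrite /Tsum mulr_sumr; apply: eq_bigr => i _; case: ifP => _; last by rewrite mulr0.
  rewrite mulr_sumr; apply: eq_bigr => k _; ring.
by apply: big1 => i _; case: ifP => //; rewrite leqNgt hM.
Qed.

Definition target N (Pc : nat -> {poly Cplx}) (a : nat -> nat -> Cplx) (s : nat) (m : int) :=
     \sum_(k < s.+1)
        ((s - k)`!%:R)^-1 *
        \sum_(l < N.+1)
           aZ a k (m + l%:Z) * ((Pc (N - l)%N)^`(s - k)).[(m + l%:Z)%:~R].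

Lemma aZ_neg a k (z : int) : z < 0 -> aZ a k z = 0.
Proof. by case: z. Qed.

Lemma target_Tsum N Pc a s J : target N Pc a s ((Posz J - Posz N)) = Tsum N Pc a s J.
Proof.
rewrite /target.
have E (k : 'I_s.+1) (l : 'I_N.+1) : ((s - k)`!%:R)^-1 *
   (aZ a k ((Posz J - Posz N) + l%:Z) * ((Pc (N - l)%N)^`(s - k)).[((Posz J - Posz N) + l%:Z)%:~R])
   = aZ a k ((Posz J - Posz N) + l%:Z) * ((Pc (N - l)%N)^`N(s - k)).[((Posz J - Posz N) + l%:Z)%:~R].
  rewrite nderivn_def hornerMn -mulr_natr.
  by field; exact: fact_neq0.
under eq_bigr => k _ do (rewrite mulr_sumr; under eq_bigr => l _ do rewrite E).
rewrite exchange_big /= (reindex_inj rev_ord_inj) /=.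
apply: eq_bigr => l _.
have hl : (l <= N)%N by rewrite -ltnS.
rewrite subSS subKn //.
have Hz : (Posz J - Posz N) + Posz (N - l)%N = (Posz J - Posz l).
  rewrite -(subzn hl); ring.
rewrite Hz; case: leqP => hlJ.
  rewrite (subzn hlJ) (reindex_inj rev_ord_inj) /=; apply: eq_bigr => k _.
  have hk : (k <= s)%N by rewrite -ltnS.
  by rewrite subSS subKn // mulrC.
apply: big1 => k _; rewrite aZ_neg ?mul0r //.
by rewrite subr_lt0 ltz_nat.
Qed.

Theorem corollary4p4 (N : nat) (Pc : nat -> {poly Cplx}) (a : nat -> nat -> Cplx) :
  perturbed_solution N Pc a <->
  (forall s : nat, (s <= N)%N -> forall m : int,
     \sum_(k < s.+1)
        ((s - k)`!%:R)^-1 *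
        \sum_(l < N.+1)
           aZ a k (m + l%:Z) * ((Pc (N - l)%N)^`(s - k)).[(m + l%:Z)%:~R]
     = 0).
Proof.
split.
  move=> H s hs m; change (target N Pc a s m = 0).
  case E: (m + N%:Z) => [J|J].
    have -> : m = Posz J - Posz N by rewrite -E; ring.
    rewrite target_Tsum; have := H s hs J 0%N.
    by rewrite Pop_Ir leq0n subn0 invr1 mul1r.
  apply: big1 => k _; rewrite mulr_sumr; apply: big1 => l _.
  rewrite aZ_neg ?mul0r ?mulr0 //.
  have hl : (l <= N)%N by rewrite -ltnS.
  apply: (le_lt_trans (y := m + N%:Z)); last by rewrite E.
  by rewrite lerD2l lez_nat.
move=> H r hr J M; rewrite Pop_Ir; case: leqP => h //.
have := H (r - M)%N (leq_trans (leq_subr M r) hr) (Posz J - Posz N).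
by rewrite -/(target N Pc a (r - M) _) target_Tsum => ->; rewrite mulr0.
Qed.
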